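(* Let $q$ be a prime power and $n$ a positive integer with $\gcd(n,q)=1$, and let $m=\mathrm{ord}_n(q)$ (the multiplicative order of $q$ modulo $n$); assume $m>3$. Then the narrow-sense bicyclic hyperbolic code of length $n\times n$ over $\mathbb{F}_q$ with design distance $d$ contains its Euclidean dual whenever $2\le d\le\Delta$, where $$\Delta=\begin{cases}\dfrac{n^2}{(q^m-1)^2}\Big[(q^m-1)-2(q^{m/2}-1)\Big] & m\text{ even},\\[2mm] \dfrac{n^2}{(q^m-1)^2}\Big[(q^m-1)-q^{(m-1)/2}\Big] & m\text{ odd}.\end{cases}$$
   Context: Bicyclic codes: linear subspaces of $\mathbb{F}_q^{n\times n}$ closed under cyclic shifts of rows and columns, identified with ideals of $\mathbb{F}_q[X,Y]/\langle X^n-1,Y^n-1\rangle$ via $c\mapsto c(X,Y)=\sum c_{i,j}X^iY^j$. Let $\alpha$ be a primitive $n$-th root of unity in $\mathbb{F}_{q^m}$. The $q$-ary cyclotomic coset of $(x,y)$ is $\{(xq^k\bmod n, yq^k\bmod n):k\ge0\}$. The narrow-sense bicyclic hyperbolic code of length $n\times n$ over $\mathbb{F}_q$ with design distance $d$ is the set of $c\in\mathbb{F}_q^{n\times n}$ with $c(\alpha^x,\alpha^y)=0$ for all $(x,y)$ in the union $Z$ of the $q$-ary cyclotomic cosets of the elements of the designed set $Z_{des}=\{(x\bmod n, y\bmod n):1\le x,y\le n,\ xy<d\}$. The Euclidean dual of $C$ is $C^\perp=\{u:\sum_{i,j}u_{i,j}v_{i,j}=0\ \forall v\in C\}$. *)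

(* Defs.v *)
From HB Require Import structures.
From mathcomp Require Import all_boot all_order all_algebra all_field.
Set Implicit Arguments. Unset Strict Implicit. Unset Printing Implicit Defensive.
Import GRing.Theory Num.Theory.
Local Open Scope ring_scope.

Definition is_mult_order (n q m : nat) : Prop :=
  [/\ (0 < m)%N, q ^ m = 1 %[mod n]
   & forall k : nat, (0 < k)%N -> q ^ k = 1 %[mod n] -> (m <= k)%N].

Definition in_Zdes (n d a b : nat) : Prop :=
  exists x y : nat, [/\ (1 <= x <= n)%N, (1 <= y <= n)%N, (x * y < d)%N,
                        a = x %% n & b = y %% n]%N.

Definition in_Z (n q d a b : nat) : Prop :=
  exists (k x y : nat), in_Zdes n d x y /\
    a = ((x * q ^ k) %% n)%N /\ b = ((y * q ^ k) %% n)%N.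

Definition bieval (F : fieldType) (L : fieldExtType F) (n : nat)
    (c : 'M[F]_n) (u v : L) : L :=
  \sum_(i < n) \sum_(j < n) (c i j)%:A * u ^+ i * v ^+ j.

Definition bch_hyp_code (F : fieldType) (L : fieldExtType F) (n q d : nat)
    (alpha : L) (c : 'M[F]_n) : Prop :=
  forall a b : nat, in_Z n q d a b -> bieval c (alpha ^+ a) (alpha ^+ b) = 0.

Definition euclid_dual (F : fieldType) (n : nat) (C : 'M[F]_n -> Prop)
    (u : 'M[F]_n) : Prop :=
  forall v : 'M[F]_n, C v -> \sum_(i < n) \sum_(j < n) u i j * v i j = 0.

Definition Delta (n q m : nat) : rat :=
  let Q : rat := (q ^ m)%N%:R - 1 in
  if ~~ odd m then
    (n ^ 2)%N%:R / Q ^+ 2 * (Q - 2%:R * ((q ^ (m %/ 2))%N%:R - 1))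
  else
    (n ^ 2)%N%:R / Q ^+ 2 * (Q - (q ^ ((m - 1) %/ 2))%N%:R).

Arguments bieval {F L} n c u v.
Arguments bch_hyp_code {F L} n q d alpha c.
Arguments euclid_dual {F} n C u.

(* Main.v *)
Require Import Defs.
From HB Require Import structures.
From mathcomp Require Import all_boot all_order all_algebra all_field.
Import GRing.Theory Num.Theory.
Local Open Scope ring_scope.
From mathcomp Require Import zify lra.
Set Warnings "-notation-overridden,-ambiguous-paths".
Set Implicit Arguments. Unset Strict Implicit.

Local Close Scope ring_scope.

Lemma X_ge_u (u w N X X' s : nat) : N + 1 = u * w -> 0 < w -> X' < N ->
  X' + w * X = s * N -> 2 <= s -> u <= X.
Proof.
move=> hN w0 hX' hs s2; rewrite leqNgt; apply/negP => hX.
have h1 : 2 * N <= s * N by rewrite leq_mul2r s2 orbT.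
have h2 : w * X.+1 <= w * u by rewrite leq_mul2l hX orbT.
lia.
Qed.

Lemma aux1 (v e Y' B: nat) :
  (e+1)*(v+2) + v + 1 <= Y' -> B + 1 <= (v+2+e)*(v+2) -> B <= (v+1)*Y'.
Proof. move=> h1 h2. have := leq_mul (leqnn (v+1)) h1. nia. Qed.

Lemma subA1 (u w N X Y X' Y' B : nat) : N + 1 = u * w -> 1 <= w <= u ->
  0 < X' -> X' + w * X = N -> Y' + w * Y = N ->
  B + w <= N -> B + 2 * u <= u * u + 1 -> X + 1 = u ->
  B <= X * Y \/ B <= X' * Y'.
Proof.
move=> hN /andP[w1 wu] X'0 hX hY hB1 hB2 hXu.
case: (leqP B (X * Y)) => [|hXY]; [by left | right].
have e1 : w * (X + 1) = w * u by rewrite hXu.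
have hYw : Y < w.
  rewrite ltnNge; apply/negP => hw.
  have : X * w <= X * Y by rewrite leq_mul2l hw orbT.
  lia.
have eX' : X' + 1 = w by lia.
have hY' : w * Y.+1 <= w * w by rewrite leq_mul2l hYw orbT.
case: (ltnP w u) => hwu.
  have [v ev] : exists v, w = v + 2 by exists (w - 2); lia.
  have [e ee] : exists e, u = v + 3 + e by exists (u - v - 3); lia.
  subst w u.
  have -> : X' = v + 1 by lia.
  apply: (@aux1 v e); lia.
have uw : u = w by apply/eqP; rewrite eqn_leq wu hwu.
subst u.
have [v ev] : exists v, w = v + 1 by exists (w - 1); lia.
subst w.
have -> : X' = v by lia.
have : v * v <= v * Y' by rewrite leq_mul2l; apply/orP; right; lia.
lia.
Qed.

Lemma XXp (N w X X' : nat) : 0 < X -> w <= X' -> X' + w * X = N -> N - w <= X * X'.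
Proof.
move=> h1 h2 h3.
have [x ex] : exists x, X = x + 1 by exists (X - 1); lia.
have [y ey] : exists y, X' = w + y by exists (X' - w); lia.
subst X X'. nia.
Qed.

Lemma subA (u w N X Y X' Y' B : nat) : N + 1 = u * w -> 1 <= w <= u ->
  0 < X -> 0 < Y -> 0 < X' -> 0 < Y' -> X' + w * X = N -> Y' + w * Y = N ->
  B + w <= N -> B + 2 * u <= u * u + 1 ->
  B <= X * Y \/ B <= X' * Y'.
Proof.
move=> hN hwu X0 Y0 X'0 Y'0 hX hY hB1 hB2.
have w1 : 1 <= w by case/andP: hwu.
have Xu : X < u.
  rewrite ltnNge; apply/negP => h.
  have : w * u <= w * X by rewrite leq_mul2l h orbT.
  lia.
have Yu : Y < u.
  rewrite ltnNge; apply/negP => h.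
  have : w * u <= w * Y by rewrite leq_mul2l h orbT.
  lia.
case: (eqVneq (X + 1) u) => [hXu|hXu].
  exact: (subA1 hN hwu X'0 hX hY hB1 hB2 hXu).
case: (eqVneq (Y + 1) u) => [hYu|hYu].
  have := subA1 hN hwu Y'0 hY hX hB1 hB2 hYu.
  by rewrite (mulnC Y) (mulnC Y').
have hX2 : w * X.+2 <= w * u by rewrite leq_mul2l; apply/orP; right; lia.
have hY2 : w * Y.+2 <= w * u by rewrite leq_mul2l; apply/orP; right; lia.
have h1 : N - w <= X * X' by apply: (XXp X0 _ hX); lia.
have h2 : N - w <= Y * Y' by apply: (XXp Y0 _ hY); lia.
case: (leqP B (X * Y)) => [|hXY]; [by left | right].
rewrite leqNgt; apply/negP => hXY'.
have h3 := ltn_mul hXY hXY'.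
have h4 := leq_mul h1 h2.
have e : X * Y * (X' * Y') = X * X' * (Y * Y') by rewrite mulnACA.
have hB : B <= N - w by lia.
have h5 := leq_mul hB hB.
move: h3 h4 h5 e; set D := N - w; set P := X * Y; set P' := X' * Y'.
set Q := X * X'; set Q' := Y * Y'; move=> h3 h4 h5 e.
have h6 : P * P' < D * D by lia.
have h7 : Q * Q' < D * D by rewrite -e.
lia.
Qed.

Lemma endA (u w N Z B : nat) : N + 1 = u * w -> 2 <= w <= u ->
  N + w <= Z + w * w -> B + w <= N -> B + 2 * u <= u * u + 1 -> B <= (w - 1) * Z.
Proof.
move=> hN /andP[w2 wu] hZ hB1 hB2.
case: (ltnP w u) => hwu.
  have [v ev] : exists v, w = v + 2 by exists (w - 2); lia.
  have [e ee] : exists e, u = v + 3 + e by exists (u - v - 3); lia.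
  subst w u.
  have -> : v + 2 - 1 = v + 1 by lia.
  apply: (@aux1 v e); lia.
have uw : u = w by apply/eqP; rewrite eqn_leq wu hwu.
subst u.
have [v ev] : exists v, w = v + 1 by exists (w - 1); lia.
subst w.
have -> : v + 1 - 1 = v by lia.
have : v * v <= v * Z by rewrite leq_mul2l; apply/orP; right; lia.
lia.
Qed.

Lemma aux2 (v e X' B : nat) :
  e * (v + 1) + v <= X' -> B + (v + 1) + 1 <= (v + 1 + e) * (v + 1) -> B <= X' * (v + 1).
Proof. move=> h1 h2. have := leq_mul h1 (leqnn (v+1)). nia. Qed.

Lemma subB (u w N X Y X' Y' B s : nat) : N + 1 = u * w -> 1 <= w <= u ->
  0 < X -> 0 < X' -> 0 < Y' -> Y < N -> X' + w * X = N -> Y' + w * Y = s * N ->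
  u <= Y -> B + w <= N -> B + 2 * u <= u * u + 1 ->
  B <= X * Y \/ B <= X' * Y'.
Proof.
move=> hN hwu X0 X'0 Y'0 YN hX hY uY hB1 hB2.
have /andP[w1 wu] := hwu.
case: (leqP B (X * Y)) => [|hXY]; [by left | right].
have Xw : X < w.
  rewrite ltnNge; apply/negP => h.
  have : w * u <= X * u by rewrite leq_mul2r h orbT.
  have : X * u <= X * Y by rewrite leq_mul2l uY orbT.
  lia.
have w2 : 2 <= w by lia.
have hXw : w * X.+1 <= w * w by rewrite leq_mul2l Xw orbT.
have uww : w * w <= u * w by rewrite leq_mul2r wu orbT.
case: (leqP w Y') => hY'.
  have h1 : X' * w <= X' * Y' by rewrite leq_mul2l hY' orbT.
  have [v ev] : exists v, w = v + 1 by exists (w - 1); lia.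
  have [e ee] : exists e, u = v + 1 + e by exists (u - v - 1); lia.
  subst w u.
  suff : B <= X' * (v + 1) by lia.
  apply: (@aux2 v e); nia.
have eu : u * (Y' + w * Y) = u * (s * N) by rewrite hY.
have hd : (N %| Y + u * Y' + N * Y)%N.
  have -> : Y + u * Y' + N * Y = (u * s) * N by lia.
  exact: dvdn_mull.
rewrite dvdn_addl ?dvdn_mulr // in hd.
case/dvdnP: hd => t ht.
have uY' : u * Y' <= u * (w - 1) by rewrite leq_mul2l; apply/orP; right; lia.
have eYN : Y + u * Y' = N.
  move: ht; case: t => [|[|t]] ht; [lia | lia |].
  have : 2 * N <= t.+2 * N by rewrite leq_mul2r; apply/orP; right.
  lia.
have [c ec] : exists c, w = Y' + c by exists (w - Y'); lia.
have c1 : 1 <= c by lia.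
have e2 : X * (Y + 1) = X * (u * c).
  congr (_ * _); rewrite ec in hN; lia.
have Xc : X * c < w.
  rewrite ltnNge; apply/negP => h.
  have : u * w <= u * (X * c) by rewrite leq_mul2l h orbT.
  lia.
case: (eqVneq c 1) => [c1'|cn1].
  have -> : Y' = w - 1 by lia.
  rewrite mulnC; apply: (endA hN _ _ hB1 hB2); [by rewrite w2 wu | lia].
case: (eqVneq Y' 1) => [Y'1|Y'n1].
  have X1 : X = 1.
    apply/eqP; rewrite eqn_leq X0 andbT leqNgt; apply/negP => h.
    have : 2 * c <= X * c by rewrite leq_mul2r h orbT.
    lia.
  subst X Y'; lia.
have h1 : X * 2 <= X * c by rewrite leq_mul2l; apply/orP; right; lia.
have h2 : X' * 2 <= X' * Y' by rewrite leq_mul2l; apply/orP; right; lia.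
have h3 : w * (2 * X) <= w * (w - 1) by rewrite leq_mul2l; apply/orP; right; lia.
lia.
Qed.

Lemma core (u w N X Y X' Y' B : nat) : N + 1 = u * w -> 1 <= w <= u ->
  0 < X < N -> 0 < Y < N -> 0 < X' < N -> 0 < Y' < N ->
  (N %| X' + w * X)%N -> (N %| Y' + w * Y)%N ->
  B + w <= N -> B + 2 * u <= u * u + 1 ->
  B <= X * Y \/ B <= X' * Y'.
Proof.
move=> hN hwu /andP[X0 XN] /andP[Y0 YN] /andP[X'0 X'N] /andP[Y'0 Y'N] hdX hdY hB1 hB2.
have w0 : 0 < w by case/andP: hwu.
case/dvdnP: hdX => s hs; case/dvdnP: hdY => t ht.
have s0 : s != 0 by apply/eqP => s0; subst s; lia.
have t0 : t != 0 by apply/eqP => t0; subst t; lia.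
case: (eqVneq s 1) => [s1|s1]; case: (eqVneq t 1) => [t1|t1].
- subst s t; rewrite !mul1n in hs ht.
  exact: (subA hN hwu X0 Y0 X'0 Y'0 hs ht hB1 hB2).
- subst s; rewrite mul1n in hs.
  have uY : u <= Y by apply: (X_ge_u hN w0 Y'N ht); lia.
  exact: (subB hN hwu X0 X'0 Y'0 YN hs ht uY hB1 hB2).
- subst t; rewrite mul1n in ht.
  have uX : u <= X by apply: (X_ge_u hN w0 X'N hs); lia.
  have := subB hN hwu Y0 Y'0 X'0 XN ht hs uX hB1 hB2.
  by rewrite (mulnC Y) (mulnC Y').
- have uX : u <= X by apply: (X_ge_u hN w0 X'N hs); lia.
  have uY : u <= Y by apply: (X_ge_u hN w0 Y'N ht); lia.
  left; have := leq_mul uX uY; lia.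
Qed.



Lemma Bbound (q m K N B : nat) : 2 <= q -> 3 < m -> K <= m - K -> N + 1 = q ^ m ->
  B = (if ~~ odd m then N - 2 * (q ^ (m %/ 2) - 1) else N - q ^ ((m - 1) %/ 2)) ->
  B + q ^ K <= N /\ B + 2 * q ^ (m - K) <= q ^ (m - K) * q ^ (m - K) + 1.
Proof.
move=> q2 m3 hK hN ->.
have q1 : 0 < q by lia.
have hm := divn_eq m 2; rewrite modn2 in hm.
set h := m %/ 2 in hm *.
have h2 : 2 <= h by lia.
have P2 : q <= q ^ h by rewrite -{1}(expn1 q) leq_pexp2l //; lia.
have hKh : q ^ K <= q ^ h by rewrite leq_pexp2l //; lia.
case: (boolP (odd m)) hm => om hm /=.
- have e1 : (m - 1) %/ 2 = h by rewrite /h; lia.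
  rewrite e1.
  have eq : q ^ m = q * (q ^ h * q ^ h) by rewrite -expnD -expnS; congr (_ ^ _); lia.
  have hu : q * q ^ h <= q ^ (m - K) by rewrite -expnS leq_pexp2l //; lia.
  move: hu hKh P2 eq; set P := q ^ h; set U := q ^ (m - K); set W := q ^ K.
  move=> hu hKh P2 eq.
  have a0 : 2 * (P * P) <= q * (P * P) by rewrite leq_mul2r q2 orbT.
  have a00 : 2 * P <= P * P by rewrite leq_mul2r; apply/orP; right; lia.
  split; first by lia.
  have [z ez] : exists z, U = q * P + z by exists (U - q * P); lia.
  rewrite ez.
  have a1 : q * P * P * 2 <= q * P * P * q by rewrite leq_mul2l q2 orbT.
  have a2 : q * P * 2 <= q * P * P by rewrite leq_mul2l; apply/orP; right; lia.
  have a3 : z <= q * P * z by rewrite -{1}(mul1n z) leq_mul2r; apply/orP; right; nia.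
  lia.
- have eq : q ^ m = q ^ h * q ^ h by rewrite -expnD; congr (_ ^ _); lia.
  have hu : q ^ h <= q ^ (m - K) by rewrite leq_pexp2l //; lia.
  move: hu hKh P2 eq; set P := q ^ h; set U := q ^ (m - K); set W := q ^ K.
  move=> hu hKh P2 eq.
  split; first by nia.
  have [z ez] : exists z, U = P + z by exists (U - P); lia.
  rewrite ez.
  have a1 : P * z >= z by rewrite -{1}(mul1n z) leq_mul2r; apply/orP; right; lia.
  nia.
Qed.

Lemma powmod (n q m e : nat) : q ^ m = 1 %[mod n] -> q ^ e = q ^ (e %% m) %[mod n].
Proof.
move=> hq; rewrite {1}(divn_eq e m) expnD [(_ %/ _) * m]mulnC expnM.
by rewrite -modnMml -modnXm hq modnXm exp1n modnMml mul1n.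
Qed.

Lemma modM_cong (n x y z : nat) : x = y %[mod n] -> x * z = y * z %[mod n].
Proof. by move=> h; rewrite -modnMml h modnMml. Qed.

Lemma modD_cong (n x y x' y' : nat) : x = y %[mod n] -> x' = y' %[mod n] ->
  x + x' = y + y' %[mod n].
Proof. by move=> h h'; rewrite -modnDm h h' modnDm. Qed.

Lemma key (n q m X1 X2 a s k k1 k2 : nat) : 0 < m -> q ^ m = 1 %[mod n] ->
  a = X1 * q ^ k1 %[mod n] -> s = X2 * q ^ k2 %[mod n] -> (n %| a * q ^ k + s)%N ->
  (n %| X1 * q ^ ((k1 + k + (m - 1) * k2) %% m) + X2)%N.
Proof.
move=> m0 hq ha hs hd.
have h1 : (n %| (a * q ^ k + s) * q ^ ((m - 1) * k2))%N by apply: dvdn_mulr.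
have e1 : (a * q ^ k + s) * q ^ ((m - 1) * k2) =
          (X1 * q ^ k1 * q ^ k + X2 * q ^ k2) * q ^ ((m - 1) * k2) %[mod n].
  by apply: modM_cong; apply: modD_cong => //; apply: modM_cong.
have e2 : (X1 * q ^ k1 * q ^ k + X2 * q ^ k2) * q ^ ((m - 1) * k2) =
          X1 * q ^ (k1 + k + (m - 1) * k2) + X2 * (q ^ m) ^ k2.
  rewrite mulnDl -!mulnA -!expnD -expnM; congr (_ * _ + _ * _); congr expn.
    lia.
  by rewrite subn1 -mulSn prednK.
have e3 : X1 * q ^ (k1 + k + (m - 1) * k2) + X2 * (q ^ m) ^ k2 =
          X1 * q ^ ((k1 + k + (m - 1) * k2) %% m) + X2 %[mod n].
  apply: modD_cong.
    by rewrite mulnC [X1 * _]mulnC; apply: modM_cong; apply: powmod.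
  have hp : (q ^ m) ^ k2 = 1 %[mod n] by rewrite -modnXm hq modnXm exp1n.
  by rewrite mulnC -{2}(mul1n X2); apply: modM_cong.
rewrite /dvdn -e3 -e2 -e1; exact: h1.
Qed.

Local Open Scope ring_scope.

Lemma frobD (F : finFieldType) (L : fieldExtType F) (x y : L) :
  (x + y) ^+ #|F| = x ^+ #|F| + y ^+ #|F|.
Proof.
have [p _ pcharFp] := finPcharP F; rewrite (card_pprimeChar pcharFp).
elim: (logn _ _) => [|n IHn]; first by rewrite !expr1.
rewrite expnSr !exprM {}IHn.
by rewrite -(pchar_lalg L) in pcharFp; rewrite -!(pFrobenius_autE pcharFp) rmorphD.
Qed.

Lemma frobXD (F : finFieldType) (L : fieldExtType F) k (x y : L) :
  (x + y) ^+ (#|F| ^ k) = x ^+ (#|F| ^ k) + y ^+ (#|F| ^ k).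
Proof.
elim: k => [|k IHk]; first by rewrite !expr1.
by rewrite expnSr !exprM IHk frobD.
Qed.

Lemma frobX0 (F : finFieldType) (L : fieldExtType F) k :
  (0 : L) ^+ (#|F| ^ k) = 0.
Proof.
rewrite expr0n expn_eq0; have := finNzRing_gt1 F.
by case: (#|F|).
Qed.

Lemma frobX_sum (F : finFieldType) (L : fieldExtType F) k (I : Type) (r : seq I)
  (P : pred I) (f : I -> L) :
  (\sum_(i <- r | P i) f i) ^+ (#|F| ^ k) = \sum_(i <- r | P i) (f i) ^+ (#|F| ^ k).
Proof.
apply: (big_morph (fun x : L => x ^+ (#|F| ^ k))) => [x y|]; first exact: frobXD.
exact: frobX0.
Qed.

Lemma frob_alg (F : finFieldType) (L : fieldExtType F) k (c : F) :
  (c%:A : L) ^+ (#|F| ^ k) = c%:A.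
Proof.
elim: k => [|k IHk]; first by rewrite expr1.
by rewrite expnSr exprM IHk -in_algE -rmorphXn expf_card.
Qed.

Lemma frob_full (F : finFieldType) (L : fieldExtType F) (x : L) :
  x ^+ (#|F| ^ \dim {:L}) = x.
Proof.
have := Fermat's_little_theorem (aspacef L) x.
by rewrite memvf => /esym/eqP.
Qed.

Lemma frob_fix (F : finFieldType) (L : fieldExtType F) (x : L) :
  x ^+ #|F| = x -> exists c : F, x = c%:A.
Proof.
move=> hx; have := Fermat's_little_theorem (1%AS : {subfield L}) x.
rewrite dimv1 expn1 hx eqxx => /vlineP [c ->]; by exists c.
Qed.

Lemma card_finL (F : finFieldType) (L : fieldExtType F) :
  #|finvect_type L| = (#|F| ^ \dim {:L})%N.
Proof.
pose T := finvect_type L.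
have := @card_vspacef F T (Vector.class (T : vectType F)).
move=> <-. rewrite card_vspace. done.
Qed.

Definition Tr (F : finFieldType) (L : fieldExtType F) (x : L) : L :=
  \sum_(k < \dim {:L}) x ^+ (#|F| ^ k).

Lemma dimL_gt0 (F : finFieldType) (L : fieldExtType F) : (0 < \dim {:L})%N.
Proof. exact: (adim_gt0 (aspacef L)). Qed.

Lemma Tr_frob (F : finFieldType) (L : fieldExtType F) (x : L) :
  Tr x ^+ #|F| = Tr x.
Proof.
rewrite /Tr -[#|F| in X in _ ^+ X]expn1 frobX_sum.
under eq_bigr => k _ do rewrite -exprM -expnSr.
have := dimL_gt0 L; have := frob_full x.
case: (\dim {:L}) => // m hx _.
rewrite big_ord_recr big_ord_recl /= hx expn0 expr1 addrC; congr (_ + _); apply: eq_bigr => i _.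
Qed.

Lemma Tr_scale (F : finFieldType) (L : fieldExtType F) (c : F) (x : L) :
  Tr (c%:A * x) = c%:A * Tr x.
Proof.
rewrite /Tr mulr_sumr; apply: eq_bigr => k _; by rewrite exprMn frob_alg.
Qed.

Lemma Tr_sum (F : finFieldType) (L : fieldExtType F) (I : Type) (r : seq I)
  (P : pred I) (f : I -> L) :
  Tr (\sum_(i <- r | P i) f i) = \sum_(i <- r | P i) Tr (f i).
Proof.
rewrite /Tr; under eq_bigr => k _ do rewrite frobX_sum.
by rewrite exchange_big.
Qed.

Definition trF (F : finFieldType) (L : fieldExtType F) (x : L) : F :=
  odflt 0 [pick c : F | c%:A == Tr x].

Lemma trF_spec (F : finFieldType) (L : fieldExtType F) (x : L) :
  (trF x)%:A = Tr x.
Proof.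
rewrite /trF; case: pickP => [c /eqP //|H].
have [c hc] := frob_fix (Tr_frob x).
by have := H c; rewrite hc eqxx.
Qed.

Lemma Tr_nonzero (F : finFieldType) (L : fieldExtType F) :
  exists x : L, Tr x != 0.
Proof.
have [x hx | H] := pickP (fun x : finvect_type L => Tr (x : L) != 0).
  by exists x.
exfalso.
have q1 := finNzRing_gt1 F.
have m0 := dimL_gt0 L.
set q := #|F| in q1 *; set m := \dim {:L} in m0 *.
pose p : {poly L} := \sum_(k < m) 'X^(q ^ k).
have hp : p != 0.
  apply/eqP => /(congr1 (fun r : {poly L} => r`_1)).
  rewrite coef0 /p coef_sum -(prednK m0).
  rewrite big_ord_recl /= coefXn expn0 eqxx big1 ?addr0.
    by move/eqP; rewrite oner_eq0.
  by move=> i _; rewrite coefXn -{1}(expn0 q) eqn_exp2l.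
have hr : all (root p) (enum (finvect_type L)).
  apply/allP => x _; rewrite /root /p horner_sum.
  have := H x; rewrite /Tr /= => /negbFE/eqP hx.
  by apply/eqP; rewrite -[in RHS]hx; apply: eq_bigr => k _; rewrite hornerXn.
have := max_poly_roots hp hr (enum_uniq _).
rewrite (_ : size _ = #|finvect_type L|); last by rewrite cardE.
rewrite card_finL -/q -/m.
have : (size p <= (q ^ m.-1).+1)%N.
  apply: leq_trans (size_sum _ _ _) _.
  apply/bigmax_leqP => i _; rewrite size_polyXn ltnS leq_pexp2l //.
    by apply: ltnW.
  by rewrite -ltnS prednK.
move=> h1 h2; have := leq_trans h2 h1; rewrite ltnS.
rewrite -{1}(prednK m0) expnS => h3.
have h4 : (0 < q ^ m.-1)%N by rewrite expn_gt0 (ltnW q1).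
move: h3 h4 q1; set z := (q ^ m.-1)%N; move=> h3 h4 h5.
nia.
Qed.

Lemma geom0 (L : fieldType) (n e : nat) (alpha : L) :
  n.-primitive_root alpha -> ~~ (n %| e)%N -> \sum_(i < n) (alpha ^+ e) ^+ i = 0.
Proof.
move=> hp he.
have h1 : alpha ^+ e != 1 by rewrite -(prim_order_dvd hp).
have : (alpha ^+ e) ^+ n - 1 = 0.
  by rewrite -exprM mulnC exprM (prim_expr_order hp) expr1n subrr.
rewrite subrX1 => /eqP; rewrite mulf_eq0 subr_eq0 (negbTE h1) /=.
by move/eqP.
Qed.

Lemma term_eq (L : fieldType) (alpha lam : L) (a b s t Q i j : nat) :
  (lam * ((alpha ^+ a) ^+ i * (alpha ^+ b) ^+ j)) ^+ Q * (alpha ^+ s) ^+ i * (alpha ^+ t) ^+ j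
  = lam ^+ Q * ((alpha ^+ (a * Q + s)) ^+ i * (alpha ^+ (b * Q + t)) ^+ j).
Proof.
rewrite !exprMn -!exprM -!mulrA -!exprD; congr (_ * _); congr (_ ^+ _).
lia.
Qed.

Lemma dual_in_code (F : finFieldType) (L : fieldExtType F) (n q d : nat)
    (alpha : L) (u : 'M[F]_n) :
  #|F| = q -> n.-primitive_root alpha ->
  (forall a b s t k, in_Z n q d a b -> in_Z n q d s t ->
      ~~ ((n %| a * q ^ k + s) && (n %| b * q ^ k + t)))%N ->
  euclid_dual n (bch_hyp_code n q d alpha) u -> bch_hyp_code n q d alpha u.
Proof.
move=> hq hprim NT hu a b hab.
set w0 := bieval n u (alpha ^+ a) (alpha ^+ b).
apply/eqP; apply: contraT => hw.
have [l0 hl0] := Tr_nonzero L.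
pose lam := l0 / w0.
pose v : 'M[F]_n := \matrix_(i, j) trF (lam * ((alpha ^+ a) ^+ i * (alpha ^+ b) ^+ j)).
have hv : bch_hyp_code n q d alpha v.
  move=> s t hst; rewrite /bieval.
  under eq_bigr => i _ do under eq_bigr => j _ do
    rewrite mxE trF_spec /Tr !mulr_suml.
  under eq_bigr => i _ do rewrite exchange_big /=.
  rewrite exchange_big /= big1 // => k _.
  under eq_bigr => i _ do under eq_bigr => j _ do rewrite hq term_eq.
  under eq_bigr => i _ do rewrite -mulr_sumr -mulr_sumr.
  rewrite -mulr_sumr -mulr_suml.
  have := NT a b s t k hab hst; rewrite negb_and => /orP [h|h].
    by rewrite (geom0 hprim h) mul0r mulr0.
  by rewrite (geom0 hprim h) mulr0 mulr0.
have := hu v hv => /(congr1 (fun c : F => c%:A : L)).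
move=> /= h0; move: h0.
rewrite scale0r scaler_suml.
under eq_bigr => i _ do rewrite scaler_suml.
under eq_bigr => i _ do under eq_bigr => j _ do
  rewrite -scalerA -mulr_algl mxE trF_spec -Tr_scale.
under eq_bigr => i _ do rewrite -Tr_sum.
rewrite -Tr_sum.
have -> : \sum_(i < n) \sum_(j < n) (u i j)%:A * (lam * ((alpha ^+ a) ^+ i * (alpha ^+ b) ^+ j))
    = lam * w0.
  rewrite /w0 /bieval mulr_sumr; apply: eq_bigr => i _.
  rewrite mulr_sumr; apply: eq_bigr => j _.
  by rewrite mulrCA !mulrA.
rewrite /lam mulfVK // => /eqP; by rewrite (negbTE hl0).
Qed.

Definition Bnat (q m N : nat) : nat :=
  if ~~ odd m then (N - 2 * (q ^ (m %/ 2) - 1))%N else (N - q ^ ((m - 1) %/ 2))%N.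

Lemma Delta_eq (n q m N : nat) : (2 <= q)%N -> (3 < m)%N -> (N + 1 = q ^ m)%N ->
  Delta n q m = (n ^ 2)%N%:R / (N%:R) ^+ 2 * (Bnat q m N)%:R.
Proof.
move=> q2 m3 hN.
have eQ : (q ^ m)%N%:R - 1 = N%:R :> rat by rewrite -hN natrD addrK.
rewrite /Delta /Bnat eQ.
have q1 : (0 < q)%N by lia.
have hm := divn_eq m 2; rewrite modn2 in hm.
set h := (m %/ 2)%N in hm *.
have h2 : (2 <= h)%N by lia.
have P2 : (q <= q ^ h)%N by rewrite -{1}(expn1 q) leq_pexp2l //; lia.
case: (boolP (odd m)) hm => om hm /=.
- have e1 : ((m - 1) %/ 2 = h)%N by rewrite /h; lia.
  rewrite e1.
  have eq : (q ^ m = q * (q ^ h * q ^ h))%N by rewrite -expnD -expnS; congr (expn _ _); lia.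
  move: P2 eq; set P := (q ^ h)%N => P2 eq.
  have a0 : (2 * (P * P) <= q * (P * P))%N by rewrite leq_mul2r q2 orbT.
  have a00 : (2 * P <= P * P)%N by rewrite leq_mul2r; apply/orP; right; lia.
  have hPN : (P <= N)%N by lia.
  by rewrite natrB.
- have eq : (q ^ m = q ^ h * q ^ h)%N by rewrite -expnD; congr (expn _ _); lia.
  move: P2 eq; set P := (q ^ h)%N => P2 eq.
  have a00 : (2 * P <= P * P)%N by rewrite leq_mul2r; apply/orP; right; lia.
  have hPN : (2 * (P - 1) <= N)%N by lia.
  rewrite natrB // natrM natrB; last by lia.
  by [].
Qed.

Lemma Delta_B (n q m d r N : nat) : (0 < n)%N -> (N = r * n)%N -> (2 <= q)%N -> (3 < m)%N ->
  (N + 1 = q ^ m)%N -> (d%:R : rat) <= Delta n q m -> (r * r * d <= Bnat q m N)%N.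
Proof.
move=> n0 eN q2 m3 hN hd.
rewrite (Delta_eq n q2 m3 hN) eN natrM in hd.
have r0 : (0 < r)%N.
  rewrite lt0n; apply/eqP => r0; subst r; rewrite mul0n in eN; subst N.
  have : (1 < q ^ m)%N by rewrite -{1}(expn0 q) ltn_exp2l //; lia.
  lia.
have hn : (n%:R : rat) != 0 by rewrite pnatr_eq0 -lt0n.
have hr : (r%:R : rat) != 0 by rewrite pnatr_eq0 -lt0n.
have e : (n ^ 2)%N%:R / (r%:R * n%:R) ^+ 2 = (r%:R ^+ 2)^-1 :> rat.
  rewrite natrX exprMn invfM mulrA [_ * (r%:R ^+ 2)^-1]mulrC -mulrA mulfV ?mulr1 //.
  by rewrite expf_neq0.
rewrite e mulrC ler_pdivlMr ?exprn_gt0 ?ltr0n // in hd.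
rewrite -(ler_nat rat) !natrM -expr2 mulrC.
by rewrite eN.
Qed.

Lemma lin1 (r a b c : nat) : (r * c + b * (r * a) = r * (a * b + c))%N.
Proof. lia. Qed.

Lemma fin1 (X Y B N w : nat) : (0 < X)%N -> (0 < Y)%N -> (X * Y < B)%N -> (B + w <= N)%N ->
  (0 < X < N)%N.
Proof. move=> h1 h2 h3 h4. rewrite h1 /=. nia. Qed.

Lemma fin2 (X Y B N w : nat) : (0 < X)%N -> (0 < Y)%N -> (X * Y < B)%N -> (B + w <= N)%N ->
  (0 < Y < N)%N.
Proof. move=> h1 h2 h3 h4. rewrite h2 /=. nia. Qed.

Lemma swapdvd (N u w X X' : nat) : (N + 1 = u * w)%N -> (N %| X' + w * X)%N ->
  (N %| X + u * X')%N.
Proof.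
move=> huw h.
have h1 : (N %| u * (X' + w * X))%N by apply: dvdn_mull.
have e : (u * (X' + w * X) = (X + u * X') + N * X)%N.
  by rewrite mulnDr mulnA -huw; lia.
by rewrite e dvdn_addl ?dvdn_mulr in h1.
Qed.

Lemma NT (n q m d : nat) : (0 < n)%N -> (2 <= q)%N -> is_mult_order n q m -> (3 < m)%N ->
  (d%:R : rat) <= Delta n q m ->
  forall a b s t k, in_Z n q d a b -> in_Z n q d s t ->
  ~~ ((n %| a * q ^ k + s) && (n %| b * q ^ k + t))%N.
Proof.
move=> n0 q2 [m0 hqm _] m3 hd a b s t k
  [k1 [x1 [y1 [[X1 [Y1 [hX1 hY1 hXY1 ex1 ey1]]] [ea eb]]]]]
  [k2 [x2 [y2 [[X2 [Y2 [hX2 hY2 hXY2 ex2 ey2]]] [es et]]]]].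
apply/negP => /andP [hda hdb].
set K := ((k1 + k + (m - 1) * k2) %% m)%N.
have hX : (n %| X1 * q ^ K + X2)%N.
  apply: (key m0 hqm _ _ hda).
    by rewrite ea ex1 modn_mod modnMml.
  by rewrite es ex2 modn_mod modnMml.
have hY : (n %| Y1 * q ^ K + Y2)%N.
  apply: (key m0 hqm _ _ hdb).
    by rewrite eb ey1 modn_mod modnMml.
  by rewrite et ey2 modn_mod modnMml.
have Km : (K < m)%N by rewrite ltn_pmod.
clearbody K.
have qm1 : (1 <= q ^ m)%N by rewrite expn_gt0; lia.
set N := (q ^ m - 1)%N.
have hN : (N + 1 = q ^ m)%N by rewrite /N subnK.
have hnN : (n %| N)%N by rewrite /N -eqn_mod_dvd // eq_sym; apply/eqP.
set r := (N %/ n)%N.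
have eN : N = (r * n)%N by rewrite /r divnK.
have hB := Delta_B n0 eN q2 m3 hN hd.
set Bn := Bnat q m N in hB.
have r0 : (0 < r)%N.
  rewrite lt0n; apply/eqP => r0; move: eN; rewrite r0 mul0n => N0.
  have : (1 < q ^ m)%N by rewrite -{1}(expn0 q) ltn_exp2l //; lia.
  by rewrite -hN N0.
move/andP: hX1 => [X10 X1n]; move/andP: hY1 => [Y10 Y1n].
move/andP: hX2 => [X20 X2n]; move/andP: hY2 => [Y20 Y2n].
have hP : ((r * X1) * (r * Y1) < Bn)%N.
  rewrite mulnACA; apply: leq_trans hB; rewrite ltn_pmul2l // muln_gt0 r0 //.
have hP' : ((r * X2) * (r * Y2) < Bn)%N.
  rewrite mulnACA; apply: leq_trans hB; rewrite ltn_pmul2l // muln_gt0 r0 //.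
have huw : (N + 1 = q ^ (m - K) * q ^ K)%N by rewrite hN -expnD subnK // ltnW.
have hdX : (N %| r * X2 + q ^ K * (r * X1))%N.
  by rewrite lin1 eN dvdn_pmul2l.
have hdY : (N %| r * Y2 + q ^ K * (r * Y1))%N.
  by rewrite lin1 eN dvdn_pmul2l.
have X0 : (0 < r * X1)%N by rewrite muln_gt0 r0.
have Y0 : (0 < r * Y1)%N by rewrite muln_gt0 r0.
have X'0 : (0 < r * X2)%N by rewrite muln_gt0 r0.
have Y'0 : (0 < r * Y2)%N by rewrite muln_gt0 r0.
have w1 : (1 <= q ^ K)%N by rewrite expn_gt0 (ltnW q2).
have u1 : (1 <= q ^ (m - K))%N by rewrite expn_gt0 (ltnW q2).
move: hP hP' huw hdX hdY X0 Y0 X'0 Y'0 w1 u1.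
set X := (r * X1)%N; set Y := (r * Y1)%N; set X' := (r * X2)%N; set Y' := (r * Y2)%N.
set w := (q ^ K)%N; set u := (q ^ (m - K))%N.
move=> hP hP' huw hdX hdY X0 Y0 X'0 Y'0 w1 u1.
case: (leqP K (m - K)) => hK.
- have [hb1 hb2] := Bbound q2 m3 hK hN (erefl Bn).
  have wu : (w <= u)%N by rewrite /u /w (leq_pexp2l (ltnW q2)).
  have := core huw (introT andP (conj w1 wu)) (fin1 X0 Y0 hP hb1) (fin2 X0 Y0 hP hb1)
    (fin1 X'0 Y'0 hP' hb1) (fin2 X'0 Y'0 hP' hb1) hdX hdY hb1 hb2.
  case => h; [have h2 := leq_ltn_trans h hP | have h2 := leq_ltn_trans h hP'];
    by rewrite ltnn in h2.
- have hK' : (m - K <= m - (m - K))%N by rewrite (subKn (ltnW Km)); exact: ltnW hK.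
  have [hb1 hb2] := Bbound q2 m3 hK' hN (erefl Bn).
  rewrite (subKn (ltnW Km)) in hb1 hb2.
  have uw : (u <= w)%N by rewrite /u /w (leq_pexp2l (ltnW q2)) ?(ltnW hK).
  have huw' : (N + 1 = w * u)%N by rewrite mulnC.
  have hdX2 : (N %| X + u * X')%N by apply: (swapdvd huw).
  have hdY2 : (N %| Y + u * Y')%N by apply: (swapdvd huw).
  have := core huw' (introT andP (conj u1 uw)) (fin1 X'0 Y'0 hP' hb1) (fin2 X'0 Y'0 hP' hb1)
    (fin1 X0 Y0 hP hb1) (fin2 X0 Y0 hP hb1) hdX2 hdY2 hb1 hb2.
  case => h; [have h2 := leq_ltn_trans h hP' | have h2 := leq_ltn_trans h hP];
    by rewrite ltnn in h2.
Qed.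

Theorem corollary5 (F : finFieldType) (q n m d : nat)
    (L : fieldExtType F) (alpha : L) :
  #|F| = q ->
  (0 < n)%N -> coprime n q ->
  is_mult_order n q m -> (3 < m)%N ->
  \dim {: L} = m ->
  n.-primitive_root alpha ->
  (2 <= d)%N -> (d%:R : rat) <= Delta n q m ->
  forall u : 'M[F]_n,
    euclid_dual n (bch_hyp_code n q d alpha) u ->
    bch_hyp_code n q d alpha u.
Proof.
move=> hq n0 cop hmo m3 hdim hprim d2 hd u hu.
apply: (dual_in_code hq hprim _ hu).
move=> a b s t k hab hst.
have q2 : (2 <= q)%N by rewrite -hq finNzRing_gt1.
exact: (NT n0 q2 hmo m3 hd k hab hst).
Qed.
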